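(* Let $\beta>0$ and let $V\in\mathbb R^{d\times d}$ be real symmetric with orthonormal eigenbasis $(e_k)_{k=1}^d$ and eigenvalues $(\lambda_k)$ satisfying $\lambda_1>\max_{k\ge2}|\lambda_k|$. Let $x_i(t)\in\mathbb S^{d-1}$, $i\in[n]$, solve \[ \dot x_i=P^\perp_{x_i}\Big(\frac1{Z_i}\sum_{j=1}^n e^{\beta\langle x_i,Vx_j\rangle}Vx_j\Big),\qquad Z_i=\sum_{k=1}^n e^{\beta\langle x_i,Vx_k\rangle}, \] and write $c_{i,k}(t)=\langle x_i(t),e_k\rangle$. If there is $\delta>0$ with $c_{i,1}(0)\le-\delta$ for all $i\in[n]$, then $x_i(t)\to-e_1$ as $t\to\infty$ for all $i\in[n]$.
   Context: $P^\perp_xy=y-\langle x,y\rangle x$ denotes the orthogonal projection onto $T_x\mathbb S^{d-1}$. *)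

(* Defs.v *)
From mathcomp Require Import all_boot all_order all_algebra.
From mathcomp Require Import all_classical all_reals all_analysis.
Set Implicit Arguments. Unset Strict Implicit. Unset Printing Implicit Defensive.
Import Order.TTheory GRing.Theory Num.Theory.
Import numFieldNormedType.Exports.
Local Open Scope ring_scope.

Definition dotp (R : realType) (d : nat) (u v : 'cV[R]_d) : R :=
  \sum_(k < d) u k 0 * v k 0.

Definition projT (R : realType) (d : nat) (x y : 'cV[R]_d) : 'cV[R]_d :=
  y - dotp x y *: x.

Definition attn_field (R : realType) (d n : nat) (beta : R) (V : 'M[R]_d)
  (X : 'I_n -> 'cV[R]_d) (i : 'I_n) : 'cV[R]_d :=
  let Z := \sum_(k < n) expR (beta * dotp (X i) (V *m X k)) in
  projT (X i) (Z^-1 *: \sum_(j < n) (expR (beta * dotp (X i) (V *m X j)) *: (V *m X j))).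

(* Main.v *)
Require Import Defs.
From mathcomp Require Import all_boot all_order all_algebra.
From mathcomp Require Import all_classical all_reals all_analysis.
From mathcomp Require Import ring lra.
Import Order.TTheory GRing.Theory Num.Theory.
Import numFieldNormedType.Exports.
Local Open Scope classical_set_scope.
Local Open Scope ring_scope.

Section Alg.
Context {R : realType} {m : nat}.
Implicit Types u v w : 'cV[R]_m.

Lemma dotpC u v : dotp u v = dotp v u.
Proof. by apply: eq_bigr => k _; rewrite mulrC. Qed.

Lemma dotpDr u v w : dotp u (v + w) = dotp u v + dotp u w.
Proof. by rewrite /dotp -big_split; apply: eq_bigr => k _; rewrite mxE mulrDr. Qed.

Lemma dotpZr u a v : dotp u (a *: v) = a * dotp u v.
Proof. by rewrite /dotp mulr_sumr; apply: eq_bigr => k _; rewrite mxE mulrCA. Qed.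

Lemma dotpNr u v : dotp u (- v) = - dotp u v.
Proof. by rewrite -scaleN1r dotpZr mulN1r. Qed.

Lemma dotpBr u v w : dotp u (v - w) = dotp u v - dotp u w.
Proof. by rewrite dotpDr dotpNr. Qed.

Lemma dotp_sumr u n (f : 'I_n -> 'cV[R]_m) :
  dotp u (\sum_(j < n) f j) = \sum_(j < n) dotp u (f j).
Proof.
rewrite /dotp; under eq_bigr do rewrite summxE mulr_sumr.
exact: exchange_big.
Qed.

Lemma dotpDl u v w : dotp (v + w) u = dotp v u + dotp w u.
Proof. by rewrite !(dotpC _ u) dotpDr. Qed.
Lemma dotpZl u a v : dotp (a *: v) u = a * dotp v u.
Proof. by rewrite !(dotpC _ u) dotpZr. Qed.
Lemma dotpBl u v w : dotp (v - w) u = dotp v u - dotp w u.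
Proof. by rewrite !(dotpC _ u) dotpBr. Qed.
Lemma dotp_suml u n (f : 'I_n -> 'cV[R]_m) :
  dotp (\sum_(j < n) f j) u = \sum_(j < n) dotp (f j) u.
Proof. by rewrite dotpC dotp_sumr; apply: eq_bigr => j _; rewrite dotpC. Qed.

Lemma dotp_ge0 u : 0 <= dotp u u.
Proof. by apply: sumr_ge0 => k _; rewrite -expr2 sqr_ge0. Qed.

End Alg.

Section Basis.
Context {R : realType} {m : nat} {e : 'I_m -> 'cV[R]_m}.
Hypothesis ortho : forall k l, dotp (e k) (e l) = (k == l)%:R.

Lemma expand (w : 'cV[R]_m) : w = \sum_(k < m) dotp (e k) w *: e k.
Proof.
pose E : 'M[R]_m := \matrix_(i, k) e k i 0.
have EE : E^T *m E = 1%:M.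
  apply/matrixP => k l; rewrite !mxE -ortho; apply: eq_bigr => i _.
  by rewrite !mxE.
have EE' : E *m E^T = 1%:M by apply: mulmx1C.
apply/matrixP => a b; rewrite (ord1 b) summxE.
have := congr1 (fun M => (M *m w) a 0) EE'; rewrite /= mul1mx -mulmxA mxE => <-.
apply: eq_bigr => k _; rewrite !mxE mulrC; congr (_ * _).
by rewrite /dotp; apply: eq_bigr => i _; rewrite !mxE.
Qed.

Lemma parseval (u w : 'cV[R]_m) :
  dotp u w = \sum_(k < m) dotp u (e k) * dotp w (e k).
Proof.
rewrite {1}(expand w) dotp_sumr; apply: eq_bigr => k _.
by rewrite dotpZr mulrC (dotpC w).
Qed.

Context {V : 'M[R]_m} {lam : 'I_m -> R}.
Hypothesis eig : forall k, V *m e k = lam k *: e k.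

Lemma dotpV (u w : 'cV[R]_m) :
  dotp u (V *m w) = \sum_(k < m) lam k * dotp u (e k) * dotp w (e k).
Proof.
rewrite {1}(expand w) mulmx_sumr dotp_sumr; apply: eq_bigr => k _.
rewrite -scalemxAr eig scalerA dotpZr (dotpC w); ring.
Qed.

End Basis.

Section Key.
Context {R : realType} {d : nat} {e : 'I_d.+1 -> 'cV[R]_d.+1}.
Hypothesis ortho : forall k l, dotp (e k) (e l) = (k == l)%:R.
Context {V : 'M[R]_d.+1} {lam : 'I_d.+1 -> R}.
Hypothesis eig : forall k, V *m e k = lam k *: e k.

Lemma dotpV0 (w : 'cV[R]_d.+1) :
  dotp (V *m w) (e ord0) = lam ord0 * dotp w (e ord0).
Proof.
rewrite dotpC (dotpV ortho eig) big_ord_recl ortho eqxx mulr1.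
rewrite big1 ?addr0 // => k _.
by rewrite ortho (negbTE (neq_lift ord0 k)) mulr0 mul0r.
Qed.

Lemma key_term (k0 dl : R) (Xi Xj : 'cV[R]_d.+1) :
  0 < k0 -> (forall k, k != ord0 -> k0 <= lam ord0 - `|lam k|) ->
  dotp Xi Xi = 1 -> dotp Xj Xj = 1 ->
  dotp Xj (e ord0) <= dotp Xi (e ord0) -> dotp Xi (e ord0) <= - dl -> 0 < dl ->
  dotp Xi (e ord0) ^+ 2 < 1 ->
  lam ord0 * dotp Xj (e ord0) - dotp Xi (V *m Xj) * dotp Xi (e ord0)
    <= - (k0 * dl) * (1 - dotp Xi (e ord0) ^+ 2).
Proof.
move=> k0p hk ni nj cji cid dlp ci1.
have Pi := parseval ortho Xi Xi; rewrite big_ord_recl ni in Pi.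
have Pj := parseval ortho Xj Xj; rewrite big_ord_recl nj in Pj.
rewrite (dotpV ortho eig) big_ord_recl.
move: Pi Pj cji cid ci1.
set ci := dotp Xi (e ord0); set cj := dotp Xj (e ord0).
set Ai := \sum_(k < d) _; set Aj := \sum_(k < d) _; set S := \sum_(k < d) _.
pose l0 := lam ord0; rewrite -/l0.
move=> Pi Pj cji cid ci1.
have AiE : Ai = 1 - ci * ci by lra.
have AjE : Aj = 1 - cj * cj by lra.
have Aip : 0 < Ai by rewrite AiE; rewrite expr2 in ci1; lra.
have hl0 : k0 <= l0.
  case: (pselect (exists k : 'I_d, True)) => [[k _]|nok].
    have := hk (lift ord0 k); rewrite eq_sym neq_lift => /(_ isT).
    have := normr_ge0 (lam (lift ord0 k)); rewrite /l0; lra.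
  have : Ai = 0 by rewrite /Ai big1 // => k _; exfalso; apply: nok; exists k.
  lra.
have HS : S <= (l0 - k0) / 2 * (Ai + Aj).
  rewrite /Ai /Aj -big_split mulr_sumr; apply: ler_sum => k _ /=.
  have := hk (lift ord0 k); rewrite eq_sym neq_lift => /(_ isT).
  set L := lam (lift ord0 k); set a := dotp Xi _; set b := dotp Xj _; rewrite -/l0 => hL.
  have h1 := ler_norm L.
  have h3 : - L <= `|L| by have := ler_norm (- L); rewrite normrN.
  have H1 : 0 <= (l0 - k0 + L) * (a - b) ^+ 2 by apply: mulr_ge0; [lra|exact: sqr_ge0].
  have H2 : 0 <= (l0 - k0 - L) * (a + b) ^+ 2 by apply: mulr_ge0; [lra|exact: sqr_ge0].
  rewrite !expr2 in H1 H2; nra.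
have hci : 0 <= - ci by lra.
have H1 : 0 <= (- ci) * ((l0 - k0) / 2 * (Ai + Aj) - S) by apply: mulr_ge0; lra.
have H2 : 0 <= (- ci) * (l0 - k0) * (Ai - Aj).
  apply: mulr_ge0; [apply: mulr_ge0; lra|]; rewrite AiE AjE; nra.
have H3 : 0 <= l0 * Ai * (ci - cj) by apply: mulr_ge0; [apply: mulr_ge0; lra|lra].
have H4 : 0 <= Ai * k0 * (- dl - ci) by apply: mulr_ge0; [apply: mulr_ge0; lra|lra].
have H0 : l0 * cj * (ci * ci + Ai - 1) = 0 by rewrite AiE; ring.
have -> : 1 - ci ^+ 2 = Ai by rewrite AiE expr2.
nra.
Qed.

Lemma key n (beta : R) (X : 'I_n -> 'cV[R]_d.+1) i (k0 dl : R) :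
  0 < k0 -> (forall k, k != ord0 -> k0 <= lam ord0 - `|lam k|) ->
  (forall j, dotp (X j) (X j) = 1) ->
  (forall j, dotp (X j) (e ord0) <= dotp (X i) (e ord0)) ->
  dotp (X i) (e ord0) <= - dl -> 0 < dl ->
  dotp (X i) (e ord0) ^+ 2 < 1 ->
  dotp (attn_field beta V X i) (e ord0) <= - (k0 * dl) * (1 - dotp (X i) (e ord0) ^+ 2).
Proof.
move=> k0p hk nX cmax cid dlp ci1.
rewrite /attn_field /projT /=.
set Z := \sum_(k < n) _.
set B := - (k0 * dl) * _.
rewrite dotpBl !dotpZl dotpZr dotp_suml dotp_sumr.
rewrite -mulrA -mulrBr mulr_suml -sumrB.
have Zp : 0 < Z.
  rewrite /Z (bigD1 i) //=.
  have : 0 <= \sum_(k < n | k != i) expR (beta * dotp (X i) (V *m X k)) by apply: sumr_ge0 => k _; exact: expR_ge0.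
  have := expR_gt0 (beta * dotp (X i) (V *m X i)); lra.
have -> : B = Z^-1 * \sum_(j < n) expR (beta * dotp (X i) (V *m X j)) * B.
  by rewrite -mulr_suml mulrA mulVf ?mul1r // gt_eqF.
apply: ler_wpM2l; first by rewrite invr_ge0 ltW.
apply: ler_sum => j _.
rewrite dotpZl dotpZr dotpV0 -mulrA -mulrBr.
apply: ler_wpM2l; first exact: expR_ge0.
exact: key_term.
Qed.

End Key.

Section Ana.
Context {R : realType}.

Lemma cvg_sum_fin T (F : set_system T) {FF : Filter F} m (g : 'I_m -> T -> R)
  (l : 'I_m -> R) :
  (forall k, g k @ F --> l k) -> (fun h => \sum_(k < m) g k h) @ F --> \sum_(k < m) l k.
Proof.
elim: m g l => [|m IH] g l H.
  rewrite big_ord0; under eq_fun do rewrite big_ord0; exact: cvg_cst.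
rewrite big_ord_recr; under eq_fun do rewrite big_ord_recr.
apply: cvgD; last exact: H.
by apply: (IH (fun k => g (widen_ord (leqnSn m) k))) => k; exact: H.
Qed.

Lemma dotp_cont {m} (w : 'cV[R]_m) : continuous (fun u : 'cV[R]_m => dotp u w).
Proof.
move=> u; rewrite /dotp.
have H : forall k, (fun v : 'cV[R]_m => v k 0 * w k 0) @ nbhs u --> u k 0 * w k 0.
  by move=> k; apply: cvgMl; exact: coord_continuous.
exact: (@cvg_sum_fin _ (nbhs u) _ m _ _ H).

Qed.

Lemma dotp_is_derive {m} (f : R -> 'cV[R]_m) t (w : 'cV[R]_m) :
  derivable f t 1 ->
  is_derive t 1 (fun s => dotp (f s) w) (dotp ('D_1 f t) w).
Proof.
move=> df.
have Hq : (fun h => h^-1 *: ((f \o shift t) (h *: 1) - f t)) @ 0^' --> 'D_1 f t.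
  exact: df.
have Hs : (fun h => h^-1 *: (((fun s => dotp (f s) w) \o shift t) (h *: 1)
     - dotp (f t) w)) @ 0^' --> dotp ('D_1 f t) w.
  have -> : (fun h => h^-1 *: (((fun s => dotp (f s) w) \o shift t) (h *: 1)
     - dotp (f t) w)) = (fun u => dotp u w) \o
       (fun h => h^-1 *: ((f \o shift t) (h *: 1) - f t)).
    apply: funext => h /=.
    by rewrite dotpZl dotpBl.
  by apply: continuous_cvg; [exact: dotp_cont | exact: Hq].
apply: DeriveDef; first exact: cvgP Hs.
exact: cvg_lim Hs.
Qed.

Lemma is_derive_cont (f : R -> R) (t : R) (df : R) :
  is_derive t 1 f df -> {for t, continuous f}.
Proof.
case=> hd _; apply: differentiable_continuous; exact/derivable1_diffP.
Qed.

End Ana.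

Section Phi.
Context {R : realType}.
Lemma phi_derive (a b t : R) : 1 + b * t != 0 ->
  is_derive t 1 (fun s => -1 + a * (1 + b * s)^-1) (- (a * b) / (1 + b * t) ^+ 2).
Proof.
move=> nz.
have h1 : is_derive t 1 (fun s : R => 1 + b * s) b.
  have -> : (fun s : R => 1 + b * s) = cst 1 + b \*: id by apply/funext => s.
  have := (is_deriveD (is_derive_cst (1:R) t 1) (is_deriveZ b (is_derive_id t 1))).
  by rewrite add0r /GRing.scale /= mulr1.
have h2 := is_deriveV (f := fun s => 1 + b * s) nz h1.
have h3 := is_deriveZ a h2.
have h4 := is_deriveD (is_derive_cst (-1 : R) t 1) h3.
have -> : (fun s => -1 + a * (1 + b * s)^-1) = cst (-1) + a \*: (fun y => (1 + b * y)^-1).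
  by apply/funext => s.
apply: (is_derive_eq h4).
rewrite add0r /GRing.scale /=.
ring.
Qed.
End Phi.

Section Contact.
Variable R : realType.

Lemma contact n (g : 'I_n -> R -> R) :
 (forall j, g j 0 < 0) ->
 (forall j, g j s @[s --> 0^'+] --> g j 0) ->
 (forall j t, 0 < t -> {for t, continuous (g j)}) ->
 (forall j t, 0 < t -> g j t = 0 -> (forall k, g k t <= 0) ->
    exists2 dg, is_derive t 1 (g j) dg & dg < 0) ->
 forall j t, 0 <= t -> g j t < 0.
Proof.
move=> g0 gr gc gd j0 t0 t00.
rewrite ltNge; apply/negP => Hbad.
pose B := [set t : R | 0 <= t /\ exists j, 0 <= g j t].
have Bne : B !=set0 by exists t0; split => //; exists j0.
have Blb : has_lbound B by exists 0 => t [].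
set ts := inf B.
have ts0 : 0 <= ts by apply: lb_le_inf => // t [].
have below : forall s, 0 <= s -> s < ts -> forall j, g j s < 0.
  move=> s s0 sts j; rewrite ltNge; apply/negP => hs.
  have := ge_inf Blb (conj s0 (ex_intro _ j hs)).
  by rewrite -/ts; lra.
have step1 : exists j, 0 <= g j ts.
  apply/not_existsP => /= hall.
  have hlt : forall j, g j ts < 0 by move=> j; rewrite ltNge; apply/negP => h; exact: (hall j).
  have [e e0 He] : exists2 e, 0 < e & forall s, ts <= s < ts + e -> forall j, g j s < 0.
    have [tsz|tsp] := eqVneq ts 0.
      have H : \forall s \near 0^'+, forall j, g j s < 0.
        apply: filter_forall => j; exact: (@cvgr_lt R _ _ _ _ _ (gr j) 0 (g0 j)).
      move: H => /nbhs_ballP [e e0 He].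
      exists e => // s /andP[s1 s2] j.
      have [->|sp] := eqVneq s 0; first exact: g0.
      apply: He; last by rewrite lt_neqAle eq_sym sp -tsz.
      rewrite /ball /= sub0r normrN ger0_norm; lra.
    have tsp' : 0 < ts by rewrite lt_neqAle eq_sym tsp.
    have H : \forall s \near ts, forall j, g j s < 0.
      apply: (@filter_forall _ _ (fun j s => g j s < 0) (nbhs ts) _) => j; exact: (@cvgr_lt R _ _ _ _ _ (gc j ts tsp') 0 (hlt j)).
    move: H => /nbhs_ballP [e e0 He].
    exists e => // s /andP[s1 s2] j.
    apply: He; rewrite /ball /= ltr_norml; lra.
  have [b Bb bts] := inf_adherent e0 (conj Bne Blb).
  have tsb := ge_inf Blb Bb.
  case: Bb => b0 [j hb].
  have := He b; rewrite tsb bts => /(_ isT j); lra.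
have [j1 hj1] := step1.
have tsp : 0 < ts.
  rewrite lt_neqAle ts0 andbT; apply/eqP => tsz; move: hj1; rewrite -tsz.
  have := g0 j1; lra.
have hm1 : forall e, Num.min e ts <= e by move=> e; rewrite ge_min lexx.
have hm2 : forall e, Num.min e ts <= ts by move=> e; rewrite ge_min lexx orbT.
have hm3 : forall e, 0 < e -> 0 < Num.min e ts by move=> e e0; rewrite lt_min e0 tsp.
have step3 : forall k, g k ts <= 0.
  move=> k; rewrite leNgt; apply/negP => hk.
  have H : \forall t \near nbhs ts, 0 < g k t by exact: (@cvgr_gt R _ _ _ _ _ (gc k ts tsp) 0 hk).
  have [e e0 He] := (nbhs_ballP _ _).1 H.
  have := hm1 e; have := hm2 e; have := hm3 e e0 => h3 h2 h1.
  have := below (ts - Num.min e ts / 2) ltac:(lra) ltac:(lra) k.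
  have : 0 < g k (ts - Num.min e ts / 2).
    by apply: He; rewrite /ball /= ltr_norml; lra.
  lra.
have hts : g j1 ts = 0 by have := step3 j1; lra.
have [dg dgd dgneg] := gd j1 ts tsp hts step3.
case: dgd => Hder Hval; rewrite -Hval in dgneg.
have H : \forall h \near 0^', h^-1 *: ((g j1 \o shift ts) (h *: 1) - g j1 ts) < 0.
  exact: (@cvgr_lt R _ _ _ _ _ Hder 0 dgneg).
have [e e0 He] := (nbhs_ballP _ _).1 H.
have := hm1 e; have := hm2 e; have := hm3 e e0 => h3 h2 h1.
pose h := - (Num.min e ts / 2).
have hneg : h < 0 by rewrite /h; lra.
have hb : ball 0 e h by rewrite /ball /= sub0r normrN ltr_norml /h; lra.
have hn0 : h != 0 by rewrite lt_eqF.
move: (He h hb hn0) => /=.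
rewrite /GRing.scale /= mulr1 hts subr0.
have := below (h + ts) ltac:(rewrite /h; lra) ltac:(rewrite /h; lra) j1.
have : h^-1 < 0 by rewrite invr_lt0.
move=> a b c; nra.
Qed.
End Contact.


Theorem corollary6p2 (R : realType) (d n : nat) (beta : R) (V : 'M[R]_d.+1)
  (e : 'I_d.+1 -> 'cV[R]_d.+1) (lam : 'I_d.+1 -> R)
  (x : 'I_n -> R -> 'cV[R]_d.+1) (delta : R) :
  0 < beta ->
  V^T = V ->
  (forall k l, dotp (e k) (e l) = (k == l)%:R) ->
  (forall k, V *m e k = lam k *: e k) ->
  (forall k, k != ord0 -> `|lam k| < lam ord0) ->
  (forall i t, 0 <= t -> dotp (x i t) (x i t) = 1) ->
  (forall i, {within `[0, +oo[, continuous (x i)}) ->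
  (forall i t, 0 < t -> derivable (x i) t 1 /\
     'D_1 (x i) t = attn_field beta V (fun j => x j t) i) ->
  0 < delta ->
  (forall i, dotp (x i 0) (e ord0) <= - delta) ->
  forall i, x i t @[t --> +oo] --> - e ord0.
Proof.
move=> bp Vsym ortho eig lamgap unit xc ode dp init i.
pose c j t := dotp (x j t) (e ord0).
pose dl := Num.min delta 1 / 2.
have hmin1 : Num.min delta 1 <= delta by rewrite ge_min lexx.
have hmin2 : Num.min delta 1 <= 1 by rewrite ge_min lexx orbT.
have hmin3 : 0 < Num.min delta 1 by rewrite lt_min dp ltr01.
have dl0 : 0 < dl by rewrite /dl; lra.
have dl1 : dl <= 1/2 by rewrite /dl; lra.
have dld : dl < delta by rewrite /dl; lra.
pose k0 := \big[Num.min/1]_(k | k != ord0) (lam ord0 - `|lam k|).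
have k0p : 0 < k0.
  rewrite /k0; elim/big_ind: _ => //.
  - by move=> u v up vp; rewrite lt_min up vp.
  - by move=> k kn; rewrite subr_gt0; exact: lamgap.
have hk : forall k, k != ord0 -> k0 <= lam ord0 - `|lam k|.
  by move=> k kn; exact: bigmin_le_cond.
pose kap := k0 * dl.
have kapp : 0 < kap by apply: mulr_gt0.
pose a := 1 - dl.
pose b := kap / 2.
have a0 : 0 < a by rewrite /a; lra.
have a1 : a < 1 by rewrite /a; lra.
have bp' : 0 < b by rewrite /b; lra.
pose phi := fun s : R => -1 + a * (1 + b * s)^-1.
have hpos : forall t, 0 <= t -> 1 <= 1 + b * t.
  by move=> t t0; have := mulr_ge0 (ltW bp') t0; lra.
have hu : forall t, 0 <= t -> 0 < (1 + b * t)^-1 /\ (1 + b * t)^-1 <= 1.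
  move=> t t0; have h := hpos t t0.
  by split; [rewrite invr_gt0; lra | rewrite invf_le1 //; lra].
have hnz : forall t, 0 <= t -> 1 + b * t != 0.
  by move=> t t0; have := hpos t t0 => h; rewrite lt0r_neq0 //; lra.
pose g := fun j t => c j t - phi t.
have dg_all : forall (j : 'I_n) (t : R), 0 < t -> is_derive t 1 (g j)
    (dotp ('D_1 (x j) t) (e ord0) - (- (a * b) / (1 + b * t) ^+ 2)).
  move=> j t tp.
  have -> : g j = (fun s => dotp (x j s) (e ord0)) - phi by apply/funext.
  apply: is_deriveB; first exact: dotp_is_derive (ode j t tp).1.
  exact: phi_derive a b t (hnz t (ltW tp)).
have main : forall j t, 0 <= t -> g j t < 0.
  apply: contact.
  - move=> j; rewrite /g /phi /c mulr0 addr0 invr1 mulr1; have := init j; rewrite /a; lra.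
  - move=> j; apply: cvgB.
    + have [_ hr] := (continuous_within_itvcyP _ _).1 (xc j).
      have := @continuous_cvg _ _ _ _ _ (x j) (fun u => dotp u (e ord0)) (x j 0) (dotp_cont (e ord0) (x j 0)) hr.
      exact.
    + apply: cvg_at_right_filter.
      exact: is_derive_cont (phi_derive a b 0 (hnz 0 (lexx 0))).
  - move=> j t tp.
    exact: is_derive_cont (dg_all j t tp).
  - move=> j t tp gj0 gle.
    exists (dotp ('D_1 (x j) t) (e ord0) - (- (a * b) / (1 + b * t) ^+ 2)).
      exact: dg_all.
    rewrite (ode j t tp).2 -exprVn.
    have cj : c j t = phi t by move: gj0; rewrite /g; lra.
    have cmax : forall k, dotp (x k t) (e ord0) <= dotp (x j t) (e ord0).
      by move=> k; have := gle k; rewrite /g -/(c j t) cj /c; lra.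
    have [u0 u1] := hu t (ltW tp).
    move: cj; rewrite /c /phi.
    move: (1 + b * t)^-1 u0 u1 => u u0 u1 cj.
    have cid : dotp (x j t) (e ord0) <= - dl.
      rewrite cj; have : a * u <= a by rewrite -[X in _ <= X]mulr1; apply: ler_wpM2l; lra.
      rewrite /a; lra.
    have ci1 : dotp (x j t) (e ord0) ^+ 2 < 1.
      rewrite cj expr2; have : 0 < a * u by apply: mulr_gt0.
      have : a * u <= a by rewrite -[X in _ <= X]mulr1; apply: ler_wpM2l; lra.
      move=> h1 h2; nra.
    have := @key R d e ortho V lam eig n beta (fun k => x k t) j k0 dl k0p hk
      (fun k => unit k t (ltW tp)) cmax cid dl0 ci1.
    rewrite /= cj => hD.
    have h1 : 0 <= kap * a * u * (1 - a * u).
      apply: mulr_ge0; first by apply: mulr_ge0; [apply: mulr_ge0|]; lra.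
      have : a * u <= a by rewrite -[X in _ <= X]mulr1; apply: ler_wpM2l; lra.
      lra.
    have h2 : 0 <= a * (kap / 2) * u * (1 - u).
      by apply: mulr_ge0; [apply: mulr_ge0; [apply: mulr_ge0|]|]; lra.
    have h3 : 0 < kap * a * u by apply: mulr_gt0; [apply: mulr_gt0|].
    move: hD; rewrite -/kap /b => hD.
    nra.
have cl : forall t, 0 <= t -> dotp (x i t) (e ord0) < phi t.
  by move=> t t0; have := main i t t0; rewrite /g /c; lra.
apply/cvgrPdist_lt => eps epsp.
pose M := 2 * a / (eps ^+ 2 * b).
have e2 : 0 < eps ^+ 2 by exact: exprn_gt0.
have M0 : 0 < M by rewrite /M; apply: divr_gt0; [lra | apply: mulr_gt0].
exists M; split; first by rewrite num_real.
move=> t Mt.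
have t0 : 0 <= t by lra.
set v := x i t + e ord0.
have -> : - e ord0 - x i t = - v by rewrite /v opprD addrC.
rewrite normrN.
have dv : dotp v v = 2 + 2 * dotp (x i t) (e ord0).
  rewrite /v dotpDl !dotpDr unit // ortho eqxx (dotpC (e ord0)) /=; ring.
have hphi : 2 + 2 * dotp (x i t) (e ord0) < eps ^+ 2.
  have := cl t t0; rewrite /phi.
  have hu1 : (1 + b * t)^-1 * (1 + b * t) = 1 by rewrite mulVf // hnz.
  have hM : eps ^+ 2 * b * M = 2 * a.
    rewrite /M mulrC divfK //; apply: lt0r_neq0; exact: mulr_gt0.
  have [u0 u1] := hu t t0.
  move: hu1 u0 u1; move: (1 + b * t)^-1 => u hu1 u0 u1.
  have h1 : 0 < eps ^+ 2 * b * (t - M) by apply: mulr_gt0; [apply: mulr_gt0|lra].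
  have h2 : 0 < u * (eps ^+ 2 * (1 + b * t) - 2 * a) by apply: mulr_gt0 => //; nra.
  move=> hc; nra.
have -> : `|v| = mx_norm v by [].
rewrite mx_normrE.
elim/big_ind: _ => //; first by move=> p q hp hq; rewrite gt_max hp hq.
move=> [k l] _ /=; rewrite (ord1 l).
have hk2 : v k 0 ^+ 2 <= dotp v v.
  rewrite /dotp (bigD1 k) //= -expr2 lerDl; apply: sumr_ge0 => l' _.
  by rewrite -expr2 sqr_ge0.
have := normr_ge0 (v k 0).
rewrite -real_normK ?num_real in hk2.
move=> hn; rewrite dv in hk2; nra.
all: done.
Qed.
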